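(* Let $k$ be a field of characteristic $0$, $n\ge 1$, $R=k[x_1,\dots,x_n]$, and let $M$ be a holonomic $D(R,k)$-module. Let $S=k[x_n]\setminus\{0\}$ and $R'=S^{-1}R=k(x_n)[x_1,\dots,x_{n-1}]$. Then $S^{-1}M$ is a holonomic $D(R',k(x_n))$-module.
   Context: For a polynomial ring $R=k[x_1,\dots,x_n]$ over a field $k$ of characteristic $0$, $D(R,k)$ is the ring of $k$-linear differential operators, $D(R,k)=R\langle\partial_1,\dots,\partial_n\rangle$ with $\partial_i=\partial/\partial x_i$. The Bernstein filtration $\mathcal F_i$ is the $k$-span of the monomials $x_1^{a_1}\cdots x_n^{a_n}\partial_1^{b_1}\cdots\partial_n^{b_n}$ with $\sum a_j+\sum b_j\le i$; its associated graded ring is a polynomial ring $k[x_1,\dots,x_n,\xi_1,\dots,\xi_n]$. A finitely generated $D(R,k)$-module $M$ is holonomic if $M=0$ or, for a filtration $\mathcal M_0\subseteq\mathcal M_1\subseteq\cdots$ of $M$ by finite-dimensional $k$-spaces with $\bigcup\mathcal M_i=M$ and $\mathcal F_i\mathcal M_j\subseteq\mathcal M_{i+j}$ (a good filtration), the associated graded module has Krull dimension $n$ over $k[x,\xi]$. Equivalently, $M$ is holonomic iff it admits such a filtration (by finite-dimensional $k$-spaces, exhaustive, compatible with the Bernstein filtration) with $\dim_k\mathcal M_i\le \eta\, i^n$ for some constant $\eta$ and all $i$. The same definitions apply to $R'=k(x_n)[x_1,\dots,x_{n-1}]$ over the field $k(x_n)$. *)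

(* Defs.v *)
From HB Require Import structures.
From mathcomp Require Import all_boot all_order all_algebra.
Set Implicit Arguments. Unset Strict Implicit. Unset Printing Implicit Defensive.
Import Order.TTheory GRing.Theory Num.Theory.
Local Open Scope ring_scope.

Definition ratfun (k : fieldType) : fieldType := {fraction {poly k}}.
Definition ratfunE (k : fieldType) (p : {poly k}) : ratfun k :=
  @FracField.tofrac {poly k} p.

Definition klinear (F : fieldType) (V : lmodType F) (f : V -> V) : Prop :=
  forall (a : F) (u v : V), f (a *: u + v) = a *: f u + f v.

(* A module over the Weyl algebra D(F[x_1..x_n], F) = F<x_i, d_i>:
   an F-vector space V with F-linear operators X i (mult. by x_i) and
   D i (action of d_i = d/dx_i) satisfying the defining relations
   [x_i,x_j] = 0, [d_i,d_j] = 0, [d_i,x_j] = delta_ij. *)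
Definition weyl_module (F : fieldType) (V : lmodType F) (n : nat)
    (X D : 'I_n -> V -> V) : Prop :=
  [/\ forall i, klinear (X i),
      forall i, klinear (D i),
      forall i j v, X i (X j v) = X j (X i v),
      forall i j v, D i (D j v) = D j (D i v)
    & forall i j v, D i (X j v) - X j (D i v) = (if i == j then v else 0)].

Definition in_span (F : fieldType) (V : lmodType F) (s : seq V) (v : V) : Prop :=
  exists c : 'I_(size s) -> F, v = \sum_(i < size s) c i *: s`_i.

(* Holonomicity via the (Bernstein) criterion of the context: there is a
   filtration M_0 <= M_1 <= ... by finite-dimensional subspaces
   (M_i = span (Mf i)), exhaustive, compatible with the Bernstein filtration
   (x_j M_i, d_j M_i <= M_(i+1)), and with dim M_i <= eta * i^n
   (dim M_i <= b  iff  M_i is spanned by at most b vectors). *)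
Definition holonomic (F : fieldType) (V : lmodType F) (n : nat)
    (X D : 'I_n -> V -> V) : Prop :=
  exists (Mf : nat -> seq V) (eta : nat),
  [/\ forall i v, in_span (Mf i) v -> in_span (Mf i.+1) v,
      forall v, exists i, in_span (Mf i) v,
      forall i j v, in_span (Mf i) v ->
          in_span (Mf i.+1) (X j v) /\ in_span (Mf i.+1) (D j v)
    & forall i, exists s : seq V,
          (size s <= eta * i ^ n)%N /\ forall v, in_span (Mf i) v <-> in_span s v].

Definition poly_act (k : fieldType) (M : lmodType k) (T : M -> M)
    (s : {poly k}) (v : M) : M :=
  \sum_(i < size s) s`_i *: iter i T v.

(* iota : M -> N exhibits N (a D(k(x_n)[x_1..x_m], k(x_n))-module) as the
   localization S^{-1} M, S = k[x_n] \ {0}, with its induced structure: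
   iota is k-linear, commutes with x_i, d_i (i <= m), sends x_n to
   multiplication by x_n in k(x_n), every element is s^{-1} iota(v), and
   iota(v) = 0 iff s v = 0 for some nonzero s in k[x_n]. *)
Definition is_localization (k : fieldType) (m : nat) (M : lmodType k)
    (X D : 'I_m.+1 -> M -> M) (N : lmodType (ratfun k))
    (X' D' : 'I_m -> N -> N) (iota : M -> N) : Prop :=
  [/\ forall (a : k) (u v : M),
        iota (a *: u + v) = ratfunE a%:P *: iota u + iota v,
      forall i v, iota (X (lift ord_max i) v) = X' i (iota v),
      forall i v, iota (D (lift ord_max i) v) = D' i (iota v),
      forall v, iota (X ord_max v) = ratfunE 'X *: iota v
    & (forall y : N, exists (v : M) (s : {poly k}),
          s != 0 /\ y = (ratfunE s)^-1 *: iota v) /\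
      (forall v : M, iota v = 0 ->
          exists s : {poly k}, s != 0 /\ poly_act (X ord_max) s v = 0)].

(* Main.v *)
Require Import Defs.
From HB Require Import structures.
From mathcomp Require Import all_boot all_order all_algebra.
From Stdlib Require Import Classical.
Set Implicit Arguments. Unset Strict Implicit. Unset Printing Implicit Defensive.
Import GRing.Theory.
Local Open Scope ring_scope.

Section Gen.
Variables (F : fieldType) (V : lmodType F).

Definition freef (I : finType) (f : I -> V) :=
  forall c : I -> F, \sum_x c x *: f x = 0 -> forall x, c x = 0.

Lemma in_span0 (s : seq V) : in_span s 0.
Proof. exists (fun _ => 0); by rewrite big1 // => i _; rewrite scale0r. Qed.

Lemma in_spanD (s : seq V) u v : in_span s u -> in_span s v -> in_span s (u + v).
Proof.
move=> [c ->] [d ->]; exists (fun i => c i + d i).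
by rewrite -big_split /=; apply: eq_bigr => i _; rewrite scalerDl.
Qed.

Lemma in_spanZ (s : seq V) a u : in_span s u -> in_span s (a *: u).
Proof.
move=> [c ->]; exists (fun i => a * c i).
by rewrite scaler_sumr; apply: eq_bigr => i _; rewrite scalerA.
Qed.

Lemma in_span_sum (s : seq V) (I : finType) (c : I -> F) (f : I -> V) :
  (forall x, in_span s (f x)) -> in_span s (\sum_x c x *: f x).
Proof.
move=> H; apply: (big_ind (in_span s)); [exact: in_span0|exact: in_spanD|].
by move=> x _; apply: in_spanZ.
Qed.

Lemma in_span_nth (s : seq V) (j : 'I_(size s)) : in_span s s`_j.
Proof.
exists (fun i => (i == j)%:R); rewrite (bigD1 j) //= eqxx scale1r big1 ?addr0 //.
by move=> i /negbTE ->; rewrite scale0r.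
Qed.

Lemma in_span_trans (s t : seq V) v :
  (forall j : 'I_(size s), in_span t s`_j) -> in_span s v -> in_span t v.
Proof. by move=> H [c ->]; apply: in_span_sum. Qed.

Lemma in_span_mem (s : seq V) v : v \in s -> in_span s v.
Proof.
move=> vs; have Hi : (index v s < size s)%N by rewrite index_mem.
by have := in_span_nth (Ordinal Hi); rewrite /= (nth_index 0 vs).
Qed.

Lemma in_span_cons (x : V) (s : seq V) v :
  in_span (x :: s) v <-> exists a w, in_span s w /\ v = a *: x + w.
Proof.
split.
  move=> [c ->]; rewrite big_ord_recl /=.
  by exists (c ord0), (\sum_(i < size s) c (lift ord0 i) *: s`_i); split => //; exists (fun i => c (lift ord0 i)).
move=> [a [w [[c ->] ->]]].
exists (fun i : 'I_(size s).+1 => if unlift ord0 i is Some j then c j else a).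
rewrite big_ord_recl /= unlift_none; congr (_ + _).
by apply: eq_bigr => i _; rewrite liftK.
Qed.

Lemma klin_sum (f : V -> V) : klinear f ->
  forall (I : finType) (c : I -> F) (g : I -> V),
  f (\sum_x c x *: g x) = \sum_x c x *: f (g x).
Proof.
move=> H I c g.
have f0 : f 0 = 0.
  have := H 1 0 0; rewrite scaler0 addr0 scale1r => h.
  by apply: (addIr (f 0)); rewrite add0r -h.
have fD : forall x y, f (x + y) = f x + f y.
  by move=> x y; have := H 1 x y; rewrite !scale1r.
have fZ a x : f (a *: x) = a *: f x by rewrite -[a *: x]addr0 H f0 addr0.
rewrite (big_morph f fD f0); apply: eq_bigr => x _; exact: fZ.
Qed.

Lemma free_bound (I : finType) (f : I -> V) (s : seq V) :
  (forall x, in_span s (f x)) -> freef f -> (#|I| <= size s)%N.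
Proof.
move=> Hs Hf.
have [C HC] := fin_all_exists Hs.
pose A : 'M[F]_(#|I|, size s) := \matrix_(r, j) C (enum_val r) j.
suff : row_free A by move/eqP => <-; exact: rank_leq_col.
rewrite -kermx_eq0; apply/eqP/row_matrixP => r; rewrite row0.
set u := row r (kermx A).
have uA : u *m A = 0 by apply/sub_kermxP; exact: row_sub.
have cz : forall x, u 0 (enum_rank x) = 0.
  apply: (Hf (fun x => u 0 (enum_rank x))).
  under eq_bigr => x _ do rewrite HC scaler_sumr.
  rewrite exchange_big /=; apply: big1 => j _.
  under eq_bigr => x _ do rewrite scalerA.
  rewrite -scaler_suml.
  have -> : \sum_x u 0 (enum_rank x) * C x j = (u *m A) 0 j.
    rewrite !mxE [RHS](reindex (@enum_rank I)) /=; last first.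
      by apply: onW_bij; exact: enum_rank_bij.
    by apply: eq_bigr => x _; rewrite [A _ _]mxE enum_rankK.
  by rewrite uA mxE scale0r.
apply/rowP => j; rewrite [RHS]mxE.
by rewrite -(enum_valK j) cz.
Qed.


Lemma in_span_map_nth (W : Type) (w0 : W) (g : W -> V) (u : seq W) (i : 'I_(size u)) :
  in_span (map g u) (g (nth w0 u i)).
Proof.
have i' : (i < size (map g u))%N by rewrite size_map.
by have := in_span_nth (Ordinal i'); rewrite /= (nth_map w0).
Qed.

Lemma extract (W : eqType) (w0 : W) (g : W -> V) (P : W -> Prop) (s : seq W) :
  (forall y, y \in s -> P y) ->
  exists u : seq W, [/\ (forall y, y \in u -> P y),
     freef (fun j : 'I_(size u) => g (nth w0 u j)) &
     (forall v, in_span (map g s) v <-> in_span (map g u) v)].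
Proof.
elim: s => [|x s IH] HP.
  by exists [::]; split => // c _ [].
have [u [Pu fu su]] : exists u : seq W, [/\ (forall y, y \in u -> P y),
     freef (fun j : 'I_(size u) => g (nth w0 u j)) &
     (forall v, in_span (map g s) v <-> in_span (map g u) v)].
  by apply: IH => y ys; apply: HP; rewrite inE ys orbT.
have subu : forall j : 'I_(size (map g s)), in_span (map g u) (map g s)`_j.
  by move=> j; apply/su; exact: in_span_nth.
case: (classic (in_span (map g u) (g x))) => gx.
  exists u; split => // v; split.
    move=> /in_span_cons [a [w [ws ->]]]; apply: in_spanD; first exact: in_spanZ.
    by apply/su.
  move=> /su vs; apply/in_span_cons; exists 0, v; split => //.
  by rewrite scale0r add0r.
exists (x :: u); split.
- by move=> y; rewrite inE => /orP [/eqP -> | /Pu]; [apply: HP; rewrite inE eqxx|].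
- move=> c; rewrite big_ord_recl /= => Hc.
  have c0 : c ord0 = 0.
    case: (eqVneq (c ord0) 0) => // cn; exfalso; apply: gx.
    have -> : g x = - (c ord0)^-1 *: \sum_(i < size u) c (lift ord0 i) *: g (nth w0 (x :: u) (lift ord0 i)).
      move/eqP: Hc; rewrite addr_eq0 => /eqP Hc.
      by apply: (scalerI cn); rewrite Hc scalerA mulrN mulfV // scaleN1r.
    by apply: in_spanZ; apply: in_span_sum => i; exact: in_span_map_nth.
  move: Hc; rewrite c0 scale0r add0r => Hc.
  have cl := fu (fun i => c (lift ord0 i)) Hc.
  by move=> i; case: (unliftP ord0 i) => [j ->|->].
- move=> v; rewrite /=; split.
    move=> /in_span_cons [a [w [ws ->]]]; apply/in_span_cons; exists a, w; split => //.
    by apply/su.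
  move=> /in_span_cons [a [w [ws ->]]]; apply/in_span_cons; exists a, w; split => //.
  by apply/su.
Qed.

End Gen.

Lemma in_span_nth' (F : fieldType) (V : lmodType F) (s : seq V) j : in_span s s`_j.
Proof.
case: (ltnP j (size s)) => hj; first exact: (in_span_nth (Ordinal hj)).
by rewrite nth_default //; exact: in_span0.
Qed.

Unset Implicit Arguments.
Set Strict Implicit.

Theorem proposition2p9 (k : fieldType) (chark : [pchar k] =i pred0)
    (m : nat) (M : lmodType k) (X D : 'I_m.+1 -> M -> M)
    (HM : weyl_module X D) (Hhol : holonomic X D)
    (N : lmodType (ratfun k)) (X' D' : 'I_m -> N -> N)
    (HN : weyl_module X' D') (iota : M -> N)
    (Hloc : is_localization X D X' D' iota) :
  holonomic X' D'.
Proof.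
have [Mf [eta [Hmono Hex HXD Hdim]]] := Hhol.
have [X'lin D'lin _ _ _] := HN.
have [Hi HX HD HXn [Hsurj _]] := Hloc.
have rE1 : ratfunE (1 : k)%:P = 1 by rewrite /ratfunE polyC1 tofrac1.
have iota0 : iota 0 = 0.
  have := Hi 1 0 0; rewrite scaler0 addr0 rE1 scale1r => h.
  by apply: (addIr (iota 0)); rewrite add0r -h.
have iotaD u v : iota (u + v) = iota u + iota v.
  by have := Hi 1 u v; rewrite scale1r rE1 scale1r.
have iotaZ a u : iota (a *: u) = ratfunE a%:P *: iota u.
  by rewrite -[a *: u]addr0 Hi iota0 addr0.
have iota_sum (I : finType) (c : I -> k) (g : I -> M) :
    iota (\sum_x c x *: g x) = \sum_x ratfunE (c x)%:P *: iota (g x).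
  rewrite (big_morph iota iotaD iota0); apply: eq_bigr => x _; exact: iotaZ.
have span_iota s v : in_span s v -> in_span (map iota s) (iota v).
  move=> [c ->]; rewrite iota_sum; apply: in_span_sum => x.
  exact: (in_span_map_nth 0).
have nth_iota s j : (map iota s)`_j = iota s`_j.
  case: (ltnP j (size s)) => hj; first by rewrite (nth_map 0).
  by rewrite !nth_default ?size_map.
have iota_iter a w : iota (iter a (X ord_max) w) = ratfunE 'X^a *: iota w.
  elim: a => [|a IHa]; first by rewrite expr0 /ratfunE tofrac1 scale1r.
  by rewrite iterS HXn IHa scalerA /ratfunE -rmorphM exprS.
have mono i d v : in_span (Mf i) v -> in_span (Mf (i + d)%N) v.
  elim: d => [|d IHd]; first by rewrite addn0.
  by move=> h; rewrite addnS; apply: Hmono; exact: IHd.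
have iterX i a w : in_span (Mf i) w -> in_span (Mf (i + a)%N) (iter a (X ord_max) w).
  move=> h; elim: a => [|a IHa]; first by rewrite addn0.
  by rewrite addnS iterS; have [] := HXD _ ord_max _ IHa.
exists (fun i => map iota (Mf i)), (eta * 2 ^ m.+1)%N; split.
- move=> i v; apply: in_span_trans => j; rewrite nth_iota.
  by apply: span_iota; apply: Hmono; exact: in_span_nth'.
- move=> y; have [v [s [_ ->]]] := Hsurj y; have [i hi] := Hex v.
  by exists i; apply: in_spanZ; exact: span_iota.
- move=> i j y [c ->]; rewrite !klin_sum //; split; apply: in_span_sum => l;
    rewrite nth_iota.
    rewrite -HX; apply: span_iota; have [] := HXD i (lift ord_max j) _ (in_span_nth' _ l) => //.
  rewrite -HD; apply: span_iota; have [] := HXD i (lift ord_max j) _ (in_span_nth' _ l) => //.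
move=> i.
have [u [Pu fu su]] := extract 0 iota (P := in_span (Mf i)) (s := Mf i)
   (fun y hy => in_span_mem hy).
exists (map iota u); split; last exact: su.
rewrite size_map.
have [s2 [hs2 es2]] := Hdim (i + i)%N.
pose h (p : 'I_i.+1 * 'I_(size u)) := iter p.1 (X ord_max) (nth 0 u p.2).
have hspan p : in_span s2 (h p).
  apply/es2; have := iterX i p.1 _ (Pu _ (mem_nth 0 (ltn_ord p.2))).
  move/(mono _ (i - p.1)%N); rewrite -addnA subnKC //.
  by rewrite -ltnS; exact: ltn_ord.
have hfree : freef h.
  move=> c Hc.
  have : iota (\sum_p c p *: h p) = 0 by rewrite Hc iota0.
  rewrite iota_sum.
  under eq_bigr => p _ do rewrite iota_iter scalerA /ratfunE -rmorphM mul_polyC.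
  pose F := fun (a : 'I_i.+1) (j : 'I_(size u)) => tofrac (c (a, j) *: 'X^a) *: iota (nth 0 u j).
  rewrite (eq_bigr (fun p => F p.1 p.2)); last by move=> [a j].
  rewrite -(pair_bigA _ F) exchange_big /= /F.
  under eq_bigr => j _ do rewrite -scaler_suml.
  move=> /fu cj [a j]; have := cj j.
  rewrite -raddf_sum.
  have -> : \sum_(a0 < i.+1) c (a0, j) *: 'X^a0 = \poly_(a0 < i.+1) c (inord a0, j).
    by rewrite poly_def; apply: eq_bigr => a0 _; rewrite inord_val.
  move/eqP; rewrite tofrac_eq0 => /eqP Hp.
  have := congr1 (fun q : {poly k} => q`_a) Hp.
  by rewrite coef_poly ltn_ord inord_val coef0.
have := free_bound hspan hfree; rewrite card_prod !card_ord => H.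
rewrite -(leq_pmul2l (ltn0Sn i)); apply: (leq_trans (leq_trans H hs2)).
rewrite addnn -mul2n expnMn (expnS i).
set A2 := (2 ^ m.+1)%N; set Y := (i ^ m)%N.
have -> : (eta * (A2 * (i * Y)) = i * (eta * A2 * Y))%N.
  by rewrite [RHS]mulnC -!mulnA (mulnC Y i).
by rewrite leq_mul2r leqnSn orbT.
Qed.
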